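(* Let $m\ge 2$, let $f(t)=t^m-\sum_{s=0}^{m-1}u_{m-s}t^s$ with $u_1,\dots,u_m\in\mathbb{Q}$ have $m$ distinct roots $\alpha_1,\dots,\alpha_m$, let $V$ be the Vandermonde matrix $V_{s,j}=\alpha_s^{\,j-1}$, let $\mathbf{x}=(x_0,\dots,x_{m-1})\in\mathbb{Q}^m$, $M=\sum_{n=0}^{m-1}x_nA^n$ with $A$ the companion matrix of $f$, and $\gamma_s=\sum_{i=0}^{m-1}x_i\alpha_s^i$. Fix $k\in\{1,\dots,m\}$ and indices $i,j,p,q\in\{1,\dots,m\}$, $(i,j)\ne(p,q)$, and set $A_s=(V^{-1})_{i,s}V_{s,j}$, $B_s=(V^{-1})_{p,s}V_{s,q}$ for $s=1,\dots,m$, with $B_k\neq0$, and $L=A_k/B_k$. Suppose $$0<c^{-1}(\mathbf{x},\alpha_k):=\max\left\{\frac{|\gamma_s|}{|\gamma_k|}: s\ne k\right\}<1,$$ let $l\neq k$ be an index with $c^{-1}(\mathbf{x},\alpha_k)=|\gamma_l|/|\gamma_k|$, and assume $A_lB_k-A_kB_l\neq 0$. Then there is a constant $C>0$ such that for all sufficiently large $n$, $$\left|\frac{M^n_{i,j}}{M^n_{p,q}}-L\right|\le C\,\bigl(c^{-1}(\mathbf{x},\alpha_k)\bigr)^n,$$ i.e. the error is $O\bigl((c^{-1}(\mathbf{x},\alpha_k))^n\bigr)$.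
   Context: The companion matrix $A=(A_{a,b})$ of $f(t)=t^m-\sum_{s=0}^{m-1}u_{m-s}t^s$ is the $m\times m$ matrix with $A_{a+1,a}=1$ for $a=1,\dots,m-1$, last column $(A_{1,m},\dots,A_{m,m})^T=(u_m,u_{m-1},\dots,u_1)^T$, and all other entries $0$. $M^n_{a,b}$ denotes the $(a,b)$-entry of the $n$-th power of $M$; $(V^{-1})_{a,b}$ denotes the $(a,b)$-entry of the inverse of $V$. *)

(* Defs.v *)
From HB Require Import structures.
From mathcomp Require Import all_boot all_order all_algebra all_field.
Set Implicit Arguments. Unset Strict Implicit. Unset Printing Implicit Defensive.
Import Order.TTheory GRing.Theory Num.Theory.
Local Open Scope ring_scope.

(* Indices are 0-based: 'I_m = {0,...,m-1} stands for {1,...,m}.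
   u : 'I_m -> rat encodes u_1,...,u_m via u_(t+1) = u t. *)

Definition charpoly_u (m : nat) (u : 'I_m -> rat) : {poly rat} :=
  'X^m - \sum_(s < m) u (rev_ord s) *: 'X^s.

Definition companion (m : nat) (u : 'I_m -> rat) : 'M[rat]_m :=
  \matrix_(a < m, b < m)
     if b.+1 == m then u (rev_ord a) else ((a : nat) == b.+1)%:R.

Definition vandermonde (m : nat) (alpha : 'I_m -> algC) : 'M[algC]_m :=
  \matrix_(s < m, j < m) alpha s ^+ j.

Definition Mx (m : nat) (u : 'I_m -> rat) (x : 'I_m -> rat) : 'M[rat]_m :=
  \sum_(n < m) x n *: (companion u) ^+ n.

Definition gamma (m : nat) (x : 'I_m -> rat) (alpha : 'I_m -> algC) (s : 'I_m) : algC :=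
  \sum_(i < m) ratr (x i) * alpha s ^+ i.

Definition cinv (m : nat) (x : 'I_m -> rat) (alpha : 'I_m -> algC) (k : 'I_m) : algC :=
  \big[Num.max/0]_(s < m | s != k) (`|gamma x alpha s| / `|gamma x alpha k|).

(* Main.v *)
Require Import Defs.
From HB Require Import structures.
From mathcomp Require Import all_boot all_order all_algebra all_field.
From mathcomp Require Import ring.
Import Order.TTheory GRing.Theory Num.Theory.
Local Open Scope ring_scope.

Lemma map_mxXn (m : nat) (M : 'M[rat]_m) n :
  map_mx (ratr : rat -> algC) (M ^+ n) = (map_mx ratr M) ^+ n.
Proof.
elim: n => [|n IH]; first by rewrite !expr0 map_mx1.
by rewrite !exprS -!mulmxE map_mxM IH.
Qed.

Lemma row_eig_pow (m : nat) (v : 'rV[algC]_m) (B : 'M[algC]_m) (lam : algC) n :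
  v *m B = lam *: v -> v *m B ^+ n = lam ^+ n *: v.
Proof.
move=> h; elim: n => [|n IH]; first by rewrite !expr0 mulmx1 scale1r.
by rewrite exprSr -mulmxE mulmxA IH -scalemxAl h scalerA -exprSr.
Qed.

Arguments row_eig_pow {m v B lam} n.

Lemma root_eq (m : nat) (u : 'I_m -> rat) (a : algC) :
  root (map_poly ratr (charpoly_u u)) a ->
  a ^+ m = \sum_(s < m) a ^+ s * ratr (u (rev_ord s)).
Proof.
have e : forall s : 'I_m, (map_poly (ratr : rat -> algC) (u (rev_ord s) *: 'X^s)).[a] = ratr (u (rev_ord s)) * a ^+ s.
  by move=> s; rewrite map_polyZ map_polyXn hornerZ hornerXn.
rewrite /root /charpoly_u rmorphB /= map_polyXn rmorph_sum /= hornerD hornerN hornerXn horner_sum.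
rewrite (eq_bigr _ (fun s _ => e s)).
rewrite subr_eq0 => /eqP ->; apply: eq_bigr => s _; exact: mulrC.
Qed.

Lemma comp_eig (m : nat) (u : 'I_m -> rat) (a : algC) :
  root (map_poly ratr (charpoly_u u)) a ->
  (\row_(j < m) a ^+ j) *m map_mx ratr (companion u) = a *: \row_(j < m) a ^+ j.
Proof.
move=> ra; apply/rowP => b; rewrite !mxE.
under eq_bigr do rewrite !mxE.
case: eqP => hb.
  rewrite -exprS hb (@root_eq _ _ _ ra); by apply: eq_bigr.
have hb' : (b.+1 < m)%N by rewrite ltn_neqAle ltn_ord andbT; apply/eqP.
rewrite (bigD1 (Ordinal hb')) //= big1 ?addr0.
  by rewrite /= eqxx rmorph1 mulr1 exprS.
move=> c hc.
have -> : (c == b.+1 :> nat) = false.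
  by apply/negbTE; apply: contra hc => /eqP hc'; apply/eqP/val_inj.
by rewrite rmorph0 mulr0.
Qed.
Lemma bernoulli (R : numDomainType) (h : R) n : 0 <= h -> 1 + h *+ n <= (1 + h) ^+ n.
Proof.
move=> h0; elim: n => [|n IH]; first by rewrite mulr0n addr0 expr0.
rewrite exprS mulrS.
have h1 : 0 <= 1 + h by rewrite addr_ge0.
apply: le_trans _ (ler_wpM2l h1 IH).
have -> : (1 + h) * (1 + h *+ n) = 1 + (h + h *+ n) + h * h *+ n.
  by rewrite mulrDl mul1r mulrDr mulr1 mulrnAr; ring.
by rewrite lerDl mulrn_wge0 // mulr_ge0.
Qed.

Lemma le_addnn (R : numDomainType) (x y w : R) : 0 <= y -> x <= w -> x <= y + w.
Proof. by move=> y0 xw; rewrite -[x]add0r lerD. Qed.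

Lemma small_pow (R : archiNumFieldType) (r eps : R) : 0 < r < 1 -> 0 < eps ->
  exists N, forall n, (N <= n)%N -> r ^+ n <= eps.
Proof.
case/andP=> r0 r1 e0.
have [h hdef] : exists h : R, h = r^-1 - 1 by eexists.
have rV1 : 1 < r^-1 by rewrite invf_gt1.
have h0 : 0 < h by rewrite hdef subr_gt0.
exists (Num.bound (eps^-1 / h)) => n hn.
have eV : 0 < eps^-1 by rewrite invr_gt0.
have bP := archi_boundP (ltW (divr_gt0 eV h0)).
have Nn : (Num.bound (eps^-1 / h))%:R <= n%:R :> R by rewrite ler_nat.
have key : eps^-1 <= (r^-1) ^+ n.
  have -> : r^-1 = 1 + h by rewrite hdef addrC subrK.
  apply: le_trans _ (@bernoulli _ h n (ltW h0)) => /=.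
  have e1 : eps^-1 <= h *+ n.
    rewrite -mulr_natr.
    have := lt_le_trans bP Nn.
    by rewrite ltr_pdivrMr // mulrC => /ltW.
  by apply: le_trans e1 _; rewrite lerDr.
have rn0 : 0 < r ^+ n by rewrite exprn_gt0.
rewrite -lef_pV2 ?posrE //.
by rewrite -exprVn.
Qed.

Lemma analytic (R : archiNumFieldType) (m : nat) (k : 'I_m) (g Aa Bb : 'I_m -> R) (r : R) :
  0 < r < 1 -> g k != 0 -> (forall s, s != k -> `|g s| <= r * `|g k|) ->
  Bb k != 0 ->
  exists2 C, 0 < C & exists N, forall n, (N <= n)%N ->
   `|(\sum_s Aa s * g s ^+ n) / (\sum_s Bb s * g s ^+ n) - Aa k / Bb k|
     <= C * r ^+ n.
Proof.
move=> /andP[r0 r1] gk0 gle bk0.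
set b := Bb k; set a := Aa k.
pose z : _ -> R := fun s => g s / g k.
have zk : z k = 1 by rewrite /z divff.
have zle : forall s, s != k -> `|z s| <= r.
  move=> s sk; rewrite /z normrM normfV ler_pdivrMr ?normr_gt0 //; exact: gle.
have zleX : forall s n, s != k -> `|z s| ^+ n <= r ^+ n.
  by move=> s n sk; apply: lerXn2r; [rewrite nnegrE | rewrite nnegrE ltW | exact: zle].
pose K : R := \sum_s `|Aa s * b - a * Bb s|.
pose Kb : R := \sum_s `|Bb s|.
have K0 : 0 <= K by apply: sumr_ge0 => s _.
have Kb0 : 0 <= Kb by apply: sumr_ge0 => s _.
have b0 : 0 < `|b| by rewrite normr_gt0.
have rr : 0 < r < 1 by rewrite r0 r1.
have e0 : 0 < `|b| / 2 / (Kb + 1).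
  by rewrite divr_gt0 ?divr_gt0 // ltr_wpDl.
have [N HN] := @small_pow R r _ rr e0.
exists (K * 2 / `|b| ^+ 2 + 1).
  by rewrite ltr_wpDl // divr_ge0 ?exprn_ge0 // mulr_ge0.
exists N => n hn.
pose X : R := \sum_s Aa s * z s ^+ n.
pose Y : R := \sum_s Bb s * z s ^+ n.
have gz : forall s, g s = z s * g k by move=> s; rewrite /z divfK.
have eA : \sum_s Aa s * g s ^+ n = X * g k ^+ n.
  by rewrite /X mulr_suml; apply: eq_bigr => s _; rewrite {1}gz exprMn mulrA.
have eB : \sum_s Bb s * g s ^+ n = Y * g k ^+ n.
  by rewrite /Y mulr_suml; apply: eq_bigr => s _; rewrite {1}gz exprMn mulrA.
have gkn : g k ^+ n != 0 by rewrite expf_neq0.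
have YB : `|Y - b| <= Kb * r ^+ n.
  rewrite /Y (bigD1 k) //= zk expr1n mulr1 addrC addrK.
  apply: le_trans (ler_norm_sum _ _ _) _.
  rewrite /Kb mulr_suml [Z in _ <= Z](bigD1 k) //=; apply: le_addnn; first by rewrite mulr_ge0 ?exprn_ge0 ?ltW.
  apply: ler_sum => s sk; rewrite normrM normrX.
  by apply: ler_wpM2l => //; apply: zleX.
have HNn := HN n hn.
have h1 : Kb * r ^+ n <= `|b| / 2.
  have rn0 : 0 <= r ^+ n by rewrite exprn_ge0 // ltW.
  apply: le_trans (_ : (Kb + 1) * r ^+ n <= _).
    by rewrite ler_wpM2r // lerDl.
  apply: le_trans (ler_wpM2l (ltW (ltr_wpDl Kb0 ltr01)) HNn) _.
  by rewrite mulrC divfK // lt0r_neq0 // ltr_wpDl.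
have Yb : `|b| / 2 <= `|Y|.
  have t1 : `|b| <= `|Y| + `|b| / 2.
    have -> : b = Y + (b - Y) by rewrite addrC subrK.
    apply: le_trans (ler_normD _ _) _.
    rewrite lerD2l distrC.
    have -> : Y + (b - Y) = b by rewrite addrC subrK.
    exact: le_trans YB h1.
  rewrite -lerBlDr in t1.
  apply: le_trans t1.
  by rewrite {2}[`|b|](splitr `|b|) addrK.
have Y0 : Y != 0.
  by rewrite -normr_gt0; apply: lt_le_trans Yb; rewrite divr_gt0.
rewrite eA eB.
have -> : X * g k ^+ n / (Y * g k ^+ n) - a / b = (X * b - a * Y) / (Y * b).
  by field; rewrite Y0 gkn bk0.
have num : X * b - a * Y = \sum_s (Aa s * b - a * Bb s) * z s ^+ n.
  rewrite /X /Y mulr_suml mulr_sumr -sumrB.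
  by apply: eq_bigr => s _; ring.
have hnum : `|X * b - a * Y| <= K * r ^+ n.
  rewrite num /K mulr_suml.
  apply: le_trans (ler_norm_sum _ _ _) _.
  apply: ler_sum => s _; rewrite normrM normrX.
  have [->|sk] := eqVneq s k.
    by rewrite /a /b subrr normr0 !mul0r.
  by apply: ler_wpM2l => //; apply: zleX.
have hinv : (`|Y| * `|b|)^-1 <= 2 / `|b| ^+ 2.
  have -> : 2 / `|b| ^+ 2 = (`|b| ^+ 2 / 2)^-1 by rewrite invf_div.
  rewrite lef_pV2 ?posrE ?mulr_gt0 ?divr_gt0 ?exprn_gt0 ?normr_gt0 ?invr_gt0 //.
  by rewrite expr2 mulrAC ler_wpM2r.
have nd : `|(X * b - a * Y) / (Y * b)| = `|X * b - a * Y| * (`|Y| * `|b|)^-1 by rewrite normrM normfV normrM.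
rewrite nd.
apply: le_trans (ler_pM _ _ hnum hinv) _ => //.
  by rewrite invr_ge0 mulr_ge0.
have rn0 : 0 <= r ^+ n by rewrite exprn_ge0 // ltW.
have -> : K * r ^+ n * (2 / `|b| ^+ 2) = K * 2 / `|b| ^+ 2 * r ^+ n by ring.
by apply: ler_wpM2r => //; rewrite lerDl.
Qed.

Lemma entries (m : nat) (u : 'I_m -> rat) (alpha : 'I_m -> algC)
  (alpha_root : forall s, root (map_poly ratr (charpoly_u u)) (alpha s))
  (Vu : vandermonde alpha \in unitmx) (x : 'I_m -> rat) (i j : 'I_m) (n : nat) :
  ratr ((Mx u x ^+ n) i j) =
  \sum_s (invmx (vandermonde alpha) i s * vandermonde alpha s j) * gamma x alpha s ^+ n.
Proof.
set V := vandermonde alpha.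
set Ac := map_mx (ratr : rat -> algC) (companion u).
pose Mc := \sum_(n < m) ratr (x n) *: Ac ^+ n.
have hMc : map_mx ratr (Mx u x) = Mc.
  apply/matrixP => a b; rewrite /Mc /Mx !mxE !summxE rmorph_sum.
  apply: eq_bigr => t _; rewrite !mxE rmorphM /= /Ac -map_mxXn.
  by rewrite mxE.
have eM : forall s, row s V *m Mc = gamma x alpha s *: row s V.
  move=> s.
  have rV : row s V = \row_(j < m) alpha s ^+ j by apply/rowP => b; rewrite !mxE.
  have eA : row s V *m Ac = alpha s *: row s V by rewrite rV comp_eig.
  rewrite /Mc mulmx_sumr.
  under eq_bigr do rewrite -scalemxAr (row_eig_pow _ eA) scalerA.
  by rewrite -scaler_suml.
have -> : ratr ((Mx u x ^+ n) i j) = (Mc ^+ n) i j.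
  by rewrite -hMc -map_mxXn mxE.
rewrite -[Mc ^+ n](mulKmx Vu) mxE.
apply: eq_bigr => s _.
have : row s (V *m Mc ^+ n) = gamma x alpha s ^+ n *: row s V.
  by rewrite row_mul (row_eig_pow _ (eM s)).
move/rowP => /(_ j); rewrite !mxE => ->.
by rewrite /V; ring.
Qed.

Lemma vand_unit (m : nat) (alpha : 'I_m -> algC) : injective alpha ->
  vandermonde alpha \in unitmx.
Proof.
move=> ainj; rewrite unitmxE unitfE.
have -> : vandermonde alpha = (Vandermonde m (\row_s alpha s))^T.
  by apply/matrixP => a b; rewrite !mxE.
rewrite det_tr det_Vandermonde.
apply/prodf_neq0 => a _; apply/prodf_neq0 => b hab.
rewrite !mxE subr_eq0; apply/eqP => /ainj eba.
by move: hab; rewrite eba ltnn.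
Qed.

Lemma max_nn (x y : algC) : 0 <= x -> 0 <= y ->
  [/\ x <= Num.max x y, y <= Num.max x y & 0 <= Num.max x y].
Proof.
move=> x0 y0; rewrite /Order.max; case: ifP => [/ltW xy|nxy]; split => //.
by rewrite real_leNgt ?ger0_real ?nxy.
Qed.

Lemma bigmax_seq (m : nat) (F : 'I_m -> algC) (P : pred 'I_m) (r : seq 'I_m) :
  (forall s, 0 <= F s) ->
  0 <= \big[Num.max/0]_(t <- r | P t) F t /\
  forall s, s \in r -> P s -> F s <= \big[Num.max/0]_(t <- r | P t) F t.
Proof.
move=> F0; elim: r => [|a r [IH0 IH]]; first by rewrite big_nil.
rewrite big_cons; case: ifP => Pa.
  have [h1 h2 h3] := @max_nn _ _ (F0 a) IH0.
  split=> // s; rewrite in_cons => /orP[/eqP -> //|sr Ps].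
  exact: le_trans (IH s sr Ps) h2.
split=> // s; rewrite in_cons => /orP[/eqP -> |sr Ps]; last exact: IH.
by rewrite Pa.
Qed.

Lemma bigmax_ge (m : nat) (F : 'I_m -> algC) (k : 'I_m) :
  (forall s, 0 <= F s) -> forall s, s != k ->
  F s <= \big[Num.max/0]_(t < m | t != k) F t.
Proof.
move=> F0 s sk; have [_ H] := @bigmax_seq m F (fun t => t != k) (index_enum _) F0.
by apply: H => //; rewrite mem_index_enum.
Qed.

Theorem theorem2 (m : nat) (hm : (2 <= m)%N) (u : 'I_m -> rat)
  (alpha : 'I_m -> algC) (alpha_inj : injective alpha)
  (alpha_root : forall s, root (map_poly ratr (charpoly_u u)) (alpha s))
  (x : 'I_m -> rat) (k i j p q : 'I_m) (hijpq : (i, j) != (p, q)) :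
  let V := vandermonde alpha in
  let A_ := fun s => invmx V i s * V s j in
  let B_ := fun s => invmx V p s * V s q in
  let L := A_ k / B_ k in
  let M := Mx u x in
  B_ k != 0 ->
  0 < cinv x alpha k < 1 ->
  forall l : 'I_m, l != k ->
  cinv x alpha k = `|gamma x alpha l| / `|gamma x alpha k| ->
  A_ l * B_ k - A_ k * B_ l != 0 ->
  exists2 C : algC, 0 < C &
    exists N : nat, forall n : nat, (N <= n)%N ->
      `| ratr ((M ^+ n) i j) / ratr ((M ^+ n) p q) - L |
        <= C * (cinv x alpha k) ^+ n.
Proof.
move=> V A_ B_ L M bk0 cr l lk hl hAB.
have Vu := @vand_unit _ _ alpha_inj.
have /andP[c0 c1] := cr.
have gk0 : gamma x alpha k != 0.
  apply/negP => /eqP g0.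
  have : cinv x alpha k = 0.
    rewrite /cinv; apply: (big_ind (fun y : algC => y = 0)) => //; first by move=> a b -> ->; rewrite /Order.max ltxx.
    by move=> s _; rewrite g0 normr0 invr0 mulr0.
  by move=> c00; move: c0; rewrite c00 ltxx.
have gle : forall s, s != k -> `|gamma x alpha s| <= cinv x alpha k * `|gamma x alpha k|.
  move=> s sk.
  have := @bigmax_ge m (fun t => `|gamma x alpha t| / `|gamma x alpha k|) k
    (fun t => divr_ge0 (normr_ge0 _) (normr_ge0 _)) s sk.
  by rewrite -/(cinv x alpha k) ler_pdivrMr ?normr_gt0.
have [C C0 [N HN]] := @analytic algC m k (gamma x alpha) A_ B_ (cinv x alpha k) cr gk0 gle bk0.
exists C => //; exists N => n hn.
rewrite /M !(@entries _ _ alpha alpha_root Vu).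
exact: HN.
Qed.
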